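(* Let $p:\{0,1\}^*\to[0,1]$ be a binary-coded probability distribution and consider the algorithm GenOpt described below, run on $p$ with fair random bits. For each $n\in\mathbb{N}$, the algorithm almost surely appends at least $n$ bits to $b$; the prefix $B_1\ldots B_n$ of $b$ has distribution $p_n$ (i.e. $\Pr(B_1\ldots B_n=s)=p(s)$ for every $s\in\{0,1\}^n$); and the algorithm, viewed as a generator producing $B_1\ldots B_n$, is entropy-optimal for $p_n$: the expected number of random bits drawn up to and including the moment the $n$-th bit is appended equals the minimum expected entropy cost over all random variate generators whose output distribution is $p_n$.
   Context: A binary-coded probability distribution is a map $p:\{0,1\}^*\to[0,1]$ with $p(\varepsilon)=1$ ($\varepsilon$ the empty string) and $p(b)=p(b0)+p(b1)$ for every finite binary string $b$. For $n\ge0$, $p_n$ denotes the discrete distribution on $\{0,1\}^n$ given by $s\mapsto p(s)$. Every real $z\in[0,1]$ has a unique concise binary expansion $z=(z_0.z_1z_2\ldots)_2=\sum_{i\ge0}z_i2^{-i}$ not ending in an infinite string of 1s; write $[z]_i:=z_i$. Algorithm GenOpt: it maintains a string $b$ (initially empty) and a counter $\ell$ (initially $0$) of random bits drawn, and repeats forever the following round, which appends one bit to $b$: if $[p(b0)]_\ell=1$ and $[p(b1)]_\ell=0$, append $0$; else if $[p(b0)]_\ell=0$ and $[p(b1)]_\ell=1$, append $1$; otherwise repeat: draw a fair random bit $x$ and set $\ell\leftarrow\ell+1$; if $x=0$ and $[p(b0)]_\ell=1$, append $0$ and end the round; if $x=1$ and $[p(b1)]_\ell=1$, append $1$ and end the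 round. A random variate generator for a distribution $q$ on $\{0,1\}^n$ is a partial map $Y:\{0,1\}^*\rightharpoonup\{0,1\}^n$ whose domain is prefix-free (if $u\in\mathrm{dom}(Y)$ then no proper extension of $u$ is in $\mathrm{dom}(Y)$) and exhaustive ($\sum_{u\in\mathrm{dom}(Y)}2^{-|u|}=1$), with $\sum_{u\in\mathrm{dom}(Y)}2^{-|u|}\mathbf{1}[Y(u)=s]=q(s)$ for all $s$; its expected entropy cost is $\sum_{u\in\mathrm{dom}(Y)}|u|\,2^{-|u|}$ (the expected number of fair input bits read). *)

(* Defs.v *)
From HB Require Import structures.
From mathcomp Require Import all_boot all_order all_algebra.
From mathcomp Require Import all_classical all_reals all_analysis.
Set Implicit Arguments. Unset Strict Implicit. Unset Printing Implicit Defensive.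
Import Order.TTheory GRing.Theory Num.Theory.
Local Open Scope classical_set_scope.
Local Open Scope ring_scope.

(* Finite binary strings are [seq bool]; the string b0 (resp. b1) is
   [rcons b false] (resp. [rcons b true]). *)

Definition binary_coded {R : realType} (p : seq bool -> R) : Prop :=
  [/\ p [::] = 1,
      (forall b, 0 <= p b <= 1) &
      (forall b, p b = p (rcons b false) + p (rcons b true))].

(* [z]_i : i-th digit of the concise binary expansion (z_0.z_1z_2...)_2 of
   z in [0,1]; it is the parity of floor (z * 2^i). *)
Definition digit {R : realType} (z : R) (i : nat) : bool :=
  odd `|Num.floor (z * 2 ^+ i)|%N.

Section GenOpt.
Variables (R : realType) (p : seq bool -> R).

(* State of GenOpt: (b, l, remaining unread input bits). *)
Definition state := (seq bool * nat * seq bool)%type.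

Fixpoint draw_loop (b : seq bool) (l : nat) (inp : seq bool) : option state :=
  match inp with
  | [::] => None
  | x :: inp' =>
      if ~~ x && digit (p (rcons b false)) l.+1 then
        Some (rcons b false, l.+1, inp')
      else if x && digit (p (rcons b true)) l.+1 then
        Some (rcons b true, l.+1, inp')
      else draw_loop b l.+1 inp'
  end.

Definition genopt_round (st : state) : option state :=
  let: (b, l, inp) := st in
  let d0 := digit (p (rcons b false)) l in
  let d1 := digit (p (rcons b true)) l in
  if d0 && ~~ d1 then Some (rcons b false, l, inp)
  else if ~~ d0 && d1 then Some (rcons b true, l, inp)
  else draw_loop b l inp.

Fixpoint genopt_run (n : nat) (u : seq bool) : option state :=
  match n with
  | 0 => Some ([::], 0, u)
  | n'.+1 => obind genopt_round (genopt_run n' u)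
  end.

(* GenOpt viewed as a generator for the first n output bits: it is defined
   on u iff the n-th bit is appended exactly when the last bit of u has been
   drawn (i.e. all of u is consumed), and outputs B_1...B_n. *)
Definition genopt_gen (n : nat) (u : seq bool) : option (seq bool) :=
  match genopt_run n u with
  | Some (b, _, [::]) => Some b
  | _ => None
  end.

End GenOpt.

(* Random variate generators: partial maps {0,1}^* -> {0,1}^n, encoded
   as functions to option (seq bool). *)
Definition gdom (Y : seq bool -> option (seq bool)) : set (seq bool) :=
  [set u | Y u <> None].

Definition prefix_free (D : set (seq bool)) : Prop :=
  forall u v, D u -> D (u ++ v) -> v = [::].

Definition weight {R : realType} (u : seq bool) : \bar R :=
  ((2 : R) ^- size u)%:E.

(* Y is a random variate generator for the distribution q on {0,1}^n
   (q is only evaluated on strings of length n). *)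
Definition is_generator {R : realType} (n : nat) (q : seq bool -> R)
    (Y : seq bool -> option (seq bool)) : Prop :=
  [/\ prefix_free (gdom Y),
      \esum_(u in gdom Y) (@weight R u) = 1%E,
      (forall u s, Y u = Some s -> size s = n) &
      (forall s, size s = n ->
         \esum_(u in [set u | Y u = Some s]) (@weight R u) = (q s)%:E)].

Definition entropy_cost {R : realType} (Y : seq bool -> option (seq bool))
    : \bar R :=
  \esum_(u in gdom Y) ((size u)%:R * (2 : R) ^- size u)%:E.

(* Main.v *)
Require Import Defs.
From HB Require Import structures.
From mathcomp Require Import all_boot all_order all_algebra.
From mathcomp Require Import all_classical all_reals all_analysis.
Import Order.TTheory GRing.Theory Num.Theory.
Local Open Scope classical_set_scope.
Local Open Scope ring_scope.
Fixpoint allseq (j : nat) : seq (seq bool) :=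
  if j is j'.+1 then [seq false :: u | u <- allseq j'] ++ [seq true :: u | u <- allseq j']
  else [:: [::]].

Lemma mem_allseq j u : (u \in allseq j) = (size u == j).
Proof.
elim: j u => [|j IH] [|x u] /=; rewrite ?mem_seq1 //.
- by rewrite mem_cat; apply/orP => -[] /mapP [].
- rewrite mem_cat eqSS -IH; case: x.
  + rewrite (mem_map (fun a b (h : true :: a = true :: b) => congr1 behead h)).
    by apply/orP/idP => [[/mapP [] //|//]|]; right.
  + rewrite (mem_map (fun a b (h : false :: a = false :: b) => congr1 behead h)).
    by apply/orP/idP => [[//|/mapP []//]|]; left.
Qed.

Lemma allseq_uniq j : uniq (allseq j).
Proof.
elim: j => [|j IH] //=; rewrite cat_uniq.
rewrite !map_inj_uniq ?IH /=; try by move=> a b [].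
rewrite andbT; apply/hasPn => u /mapP [v _ ->]; by apply/mapP => -[w _] [].
Qed.

Lemma count_allseqS (P : pred (seq bool)) j :
  count P (allseq j.+1) =
  (count (fun u => P (false :: u)) (allseq j) + count (fun u => P (true :: u)) (allseq j))%N.
Proof. by rewrite /= count_cat !count_map. Qed.

Lemma count_split (A B : pred (seq bool)) m k :
  count (fun u => A (take m u) && B (drop m u)) (allseq (m + k)) =
  (count A (allseq m) * count B (allseq k))%N.
Proof.
elim: m A => [|m IH] A.
  rewrite add0n /=; under eq_count do rewrite take0 drop0.
  by case: (A [::]) => /=; rewrite ?mul1n ?mul0n ?addn0 // count_pred0.
rewrite addSn !count_allseqS /= mulnDl -(IH (fun u => A (false :: u))) -(IH (fun u => A (true :: u))) //.
Qed.

Lemma draw_loop_cat (R : realType) (p : seq bool -> R) b l inp w b' l' r :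
  draw_loop p b l inp = Some (b', l', r) ->
  draw_loop p b l (inp ++ w) = Some (b', l', r ++ w).
Proof.
elim: inp l => [|x inp IH] l //=.
case: ifP => _; first by case=> <- <- <-.
case: ifP => _; first by case=> <- <- <-.
exact: IH.
Qed.

Lemma draw_loop_suffix (R : realType) (p : seq bool -> R) b l inp b' l' r :
  draw_loop p b l inp = Some (b', l', r) ->
  exists u1, [/\ inp = u1 ++ r, l' = (l + size u1)%N,
    draw_loop p b l u1 = Some (b', l', [::]) & exists y, b' = rcons b y].
Proof.
elim: inp l => [|x inp IH] l //=.
case: ifP => H1.
  by case=> <- <- <-; exists [:: x]; split => //; [rewrite addn1|rewrite /= H1|exists false].
case: ifP => H2.
  by case=> <- <- <-; exists [:: x]; split => //; [rewrite addn1|rewrite /= H1 H2|exists true].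
move=> /IH [u1 [-> -> Hd Hy]]; exists (x :: u1); split => //.
- by rewrite /= addSnnS.
- by rewrite /= H1 H2.
Qed.

Lemma round_cat (R : realType) (p : seq bool -> R) b l inp w b' l' r :
  genopt_round p (b, l, inp) = Some (b', l', r) ->
  genopt_round p (b, l, inp ++ w) = Some (b', l', r ++ w).
Proof.
rewrite /genopt_round.
case: ifP => _; first by case=> <- <- <-.
case: ifP => _; first by case=> <- <- <-.
exact: draw_loop_cat.
Qed.

Lemma round_suffix (R : realType) (p : seq bool -> R) b l inp b' l' r :
  genopt_round p (b, l, inp) = Some (b', l', r) ->
  exists u1, [/\ inp = u1 ++ r, l' = (l + size u1)%N,
    genopt_round p (b, l, u1) = Some (b', l', [::]) & exists y, b' = rcons b y].
Proof.
rewrite /genopt_round.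
case: ifP => H1.
  by case=> <- <- <-; exists [::]; split => //; [rewrite addn0|exists false].
case: ifP => H2.
  by case=> <- <- <-; exists [::]; split => //; [rewrite addn0|exists true].
move=> /draw_loop_suffix [u1 [E1 E2 E3 E4]]; exists u1; split => //.
Qed.

Lemma run_cat (R : realType) (p : seq bool -> R) k u w b l r :
  genopt_run p k u = Some (b, l, r) ->
  genopt_run p k (u ++ w) = Some (b, l, r ++ w).
Proof.
elim: k b l r => [|k IH] b l r /=; first by case=> <- <- <-.
case E: (genopt_run p k u) => [[[b0 l0] r0]|] //=.
by rewrite (IH _ _ _ E) /=; apply: round_cat.
Qed.

Lemma run_suffix (R : realType) (p : seq bool -> R) k u b l r :
  genopt_run p k u = Some (b, l, r) ->
  exists u1, [/\ u = u1 ++ r, l = size u1, genopt_run p k u1 = Some (b, l, [::])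
     & size b = k].
Proof.
elim: k b l r => [|k IH] b l r /=; first by case=> <- <- <-; exists [::].
case E: (genopt_run p k u) => [[[b0 l0] r0]|] //=.
move=> /round_suffix [u2 [Er El Hr [y Eb]]].
have [u1 [Eu Hl Hrun Hs]] := IH _ _ _ E.
exists (u1 ++ u2); split.
- by rewrite Eu Er catA.
- by rewrite El Hl size_cat.
- by rewrite (run_cat _ _ _ _ u2 _ _ _ Hrun) /= -Hr.
- by rewrite Eb size_rcons Hs.
Qed.

Lemma count_sum (T : Type) (a : pred T) (r : seq T) :
  count a r = (\sum_(j <- r) (a j : nat))%N.
Proof. by elim: r => [|x r IH]; rewrite ?big_nil ?big_cons //= IH. Qed.

Definition Ncnt (R : realType) (p : seq bool -> R) b j :=
  count (fun u => genopt_run p (size b) u == Some (b, j, [::])) (allseq j).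

Definition TRc (R : realType) (p : seq bool -> R) b x l k :=
  count (fun w => genopt_round p (b, l, w) == Some (rcons b x, (l + k)%N, [::]))
    (allseq k).

Arguments Ncnt {R} p b j.
Arguments TRc {R} p b x l k.

Lemma ind_step (R : realType) (p : seq bool -> R) b x j u : size u = j ->
  ((genopt_run p (size b).+1 u == Some (rcons b x, j, [::])) : nat) =
  (\sum_(l < j.+1) ((genopt_run p (size b) (take l u) == Some (b, (l : nat), [::]))
     && (genopt_round p (b, (l : nat), drop l u) == Some (rcons b x, j, [::]))
     : nat))%N.
Proof.
move=> Hu.
set Q := fun l : nat => (genopt_run p (size b) (take l u) == Some (b, l, [::]))
     && (genopt_round p (b, l, drop l u) == Some (rcons b x, j, [::])).
have K1 l : Q l -> genopt_run p (size b) u = Some (b, l, drop l u) /\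
   genopt_run p (size b).+1 u = Some (rcons b x, j, [::]).
  move=> /andP [/eqP H1 /eqP H2].
  have H3 := run_cat _ _ _ _ (drop l u) _ _ _ H1.
  rewrite cat_take_drop /= in H3; split => //.
  by rewrite /= H3 /=.
case: (boolP (genopt_run p (size b).+1 u == Some (rcons b x, j, [::]))) => H.
- move: H => /=.
  case E: (genopt_run p (size b) u) => [[[b2 l2] r2]|] //= /eqP H.
  have [u2 [Er El Hr [y Eb]]] := round_suffix _ _ _ _ _ _ _ _ H.
  have [u1 [Eu Hl Hrun Hs]] := run_suffix _ _ _ _ _ _ _ E.
  have [Ebb _] := rcons_inj Eb; subst b2.
  rewrite cats0 in Er; subst r2.
  have Hlj : (l2 < j.+1)%N by rewrite ltnS -Hu Eu size_cat Hl leq_addr.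
  have HQ : Q l2.
    rewrite /Q Eu Hl take_size_cat // drop_size_cat // -Hl Hrun eqxx /=.
    by apply/eqP.
  rewrite (bigD1 (Ordinal Hlj)) //= -/(Q l2) HQ big1 //.
  move=> i /eqP Hi; rewrite -/(Q i); case: (boolP (Q i)) => // /K1 [Hi1 _].
  exfalso; move: Hi1; rewrite E => -[Hli _].
  by apply: Hi; apply: val_inj; rewrite /= Hli.
- symmetry; apply: big1 => i _; rewrite -/(Q i); case: (boolP (Q i)) => // /K1 [_ Hi].
  by move: H; rewrite Hi eqxx.
Qed.

Lemma N_step (R : realType) (p : seq bool -> R) b x j :
  Ncnt p (rcons b x) j = (\sum_(l < j.+1) Ncnt p b l * TRc p b x l (j - l))%N.
Proof.
rewrite /Ncnt size_rcons count_sum big_seq.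
under eq_bigr => u.
  rewrite mem_allseq => /eqP Hu.
  rewrite (ind_step _ _ _ _ _ _ Hu).
  over.
rewrite -big_seq exchange_big /=.
apply: eq_bigr => l _.
rewrite -count_sum.
have Hl : (l <= j)%N by rewrite -ltnS.
have := count_split (fun v => genopt_run p (size b) v == Some (b, (l : nat), [::]))
  (fun w => genopt_round p (b, (l : nat), w) == Some (rcons b x, (l + (j - l))%N, [::]))
  l (j - l).
by rewrite /TRc subnKC // => ->.
Qed.

Definition Gp (R : realType) (p : seq bool -> R) b l k :=
  (\prod_(i < k) ((~~ digit (p (rcons b false)) (l + i).+1 : nat)
                 + (~~ digit (p (rcons b true)) (l + i).+1 : nat)))%N.
Arguments Gp {R} p b l k.

Lemma rcons_ft (b : seq bool) : (rcons b false == rcons b true) = false.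
Proof. by apply/negbTE/eqP => /rcons_inj []. Qed.

Lemma rcons_tf (b : seq bool) : (rcons b true == rcons b false) = false.
Proof. by apply/negbTE/eqP => /rcons_inj []. Qed.

Lemma Some_ft (b : seq bool) (l1 l2 : nat) (r1 r2 : seq bool) :
  (Some (rcons b false, l1, r1) == Some (rcons b true, l2, r2)) = false.
Proof. by apply/negbTE/eqP => -[] /rcons_inj []. Qed.

Lemma Some_tf (b : seq bool) (l1 l2 : nat) (r1 r2 : seq bool) :
  (Some (rcons b true, l1, r1) == Some (rcons b false, l2, r2)) = false.
Proof. by apply/negbTE/eqP => -[] /rcons_inj []. Qed.

Lemma DL_formula (R : realType) (p : seq bool -> R) b x k l :
  count (fun w => draw_loop p b l w == Some (rcons b x, (l + k.+1)%N, [::]))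
    (allseq k.+1) = (Gp p b l k * digit (p (rcons b x)) (l + k.+1))%N.
Proof.
elim: k l => [|k IH] l.
  rewrite /Gp big_ord0 mul1n addn1 /=.
  case: x; case: (digit (p (rcons b false)) l.+1);
    case: (digit (p (rcons b true)) l.+1) => //=;
    rewrite ?eqxx ?Some_ft ?Some_tf //.
rewrite count_allseqS /=.
have Hw : forall (y : seq bool) (l' : nat) (w : seq bool), w \in allseq k.+1 ->
    (Some (y, l', w) == Some (rcons b x, (l + k.+2)%N, [::])) = false.
  move=> y l1 w; rewrite mem_allseq; case: w => [//|z w _].
  by apply/negbTE/eqP => -[].
rewrite (eq_in_count (a2 := fun w => (~~ digit (p (rcons b false)) l.+1) &&
   (draw_loop p b l.+1 w == Some (rcons b x, (l.+1 + k.+1)%N, [::])))); last first.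
  move=> w Hw'; case: (digit (p (rcons b false)) l.+1) => /=; first by rewrite Hw.
  by rewrite addSnnS.
rewrite [X in (_ + X)%N](eq_in_count (a2 := fun w => (~~ digit (p (rcons b true)) l.+1) &&
   (draw_loop p b l.+1 w == Some (rcons b x, (l.+1 + k.+1)%N, [::])))); last first.
  move=> w Hw'; case: (digit (p (rcons b true)) l.+1) => /=; first by rewrite Hw.
  by rewrite addSnnS.
have Hc : forall (bb : bool) (P : pred (seq bool)) s, count (fun w => bb && P w) s = (bb * count P s)%N.
  by move=> [] P s; rewrite ?mul1n ?mul0n //= count_pred0.
rewrite !Hc IH -mulnDl /Gp big_ord_recl -!mulnA addn0; congr (_ * _)%N.
rewrite addSnnS; congr (_ * _)%N.
by apply: eq_bigr => i _; rewrite /bump /= addnS.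
Qed.

Lemma count_andl (bb : bool) (P : pred (seq bool)) s :
  count (fun w => bb && P w) s = (bb * count P s)%N.
Proof. by case: bb; rewrite ?mul1n ?mul0n //= count_pred0. Qed.

Lemma TRc0 (R : realType) (p : seq bool -> R) b x l :
  TRc p b x l 0 = nat_of_bool (if x then ~~ digit (p (rcons b false)) l && digit (p (rcons b true)) l
                   else digit (p (rcons b false)) l && ~~ digit (p (rcons b true)) l).
Proof.
rewrite /TRc /= addn0 /genopt_round.
case: x; case: (digit (p (rcons b false)) l);
    case: (digit (p (rcons b true)) l) => //=;
    rewrite ?addn0 ?eqxx ?Some_ft ?Some_tf //.
Qed.

Lemma TRcS (R : realType) (p : seq bool -> R) b x l k :
  TRc p b x l k.+1 = ((digit (p (rcons b false)) l == digit (p (rcons b true)) l) *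
     (Gp p b l k * digit (p (rcons b x)) (l + k.+1)))%N.
Proof.
rewrite /TRc -DL_formula -count_andl; apply: eq_in_count => w.
rewrite mem_allseq /genopt_round.
case: (digit (p (rcons b false)) l); case: (digit (p (rcons b true)) l) => //=;
  case: w => [//|z w _]; by apply/negbTE/eqP => -[].
Qed.

Definition G2 (a c : nat -> bool) l k :=
  (\prod_(i < k) ((~~ a (l + i).+1 : nat) + (~~ c (l + i).+1 : nat)))%N.

Definition T0 (a c : nat -> bool) l k :=
  match k with
  | 0 => nat_of_bool (a l && ~~ c l)
  | k'.+1 => ((a l == c l) * (G2 a c l k' * a (l + k'.+1)))%N
  end.

Lemma G2_sym a c l k : G2 a c l k = G2 c a l k.
Proof. by apply: eq_bigr => i _; rewrite addnC. Qed.

Lemma G2S a c l k : G2 a c l k.+1 =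
  (G2 a c l k * ((~~ a (l + k).+1 : nat) + (~~ c (l + k).+1 : nat)))%N.
Proof. by rewrite /G2 big_ord_recr. Qed.

Lemma carry_identity (a c d e : nat -> bool) :
  (d 0 : nat) = ((a 0 : nat) + c 0 + e 0)%N ->
  (forall m, ((d m.+1 : nat) + 2 * e m = (a m.+1 : nat) + c m.+1 + e m.+1)%N) ->
  forall m, (\sum_(l < m.+1) d l * ((a l == c l) * G2 a c l (m - l)))%N = e m /\
            (\sum_(l < m.+1) d l * T0 a c l (m - l))%N = a m.
Proof.
move=> H0 HS; elim=> [|m [IH1 IH2]].
  rewrite !big_ord1 /= /G2 big_ord0.
  by move: H0; case: (a 0); case: (c 0); case: (d 0); case: (e 0).
rewrite big_ord_recr [X in _ /\ X = _]big_ord_recr /= !subnn.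
have E1 : (\sum_(i < m.+1) d i * ((a i == c i) * G2 a c i (m.+1 - i)))%N =
   (e m * ((~~ a m.+1 : nat) + (~~ c m.+1 : nat)))%N.
  rewrite -IH1 big_distrl /=; apply: eq_bigr => i _.
  have Hi : (i <= m)%N by rewrite -ltnS.
  by rewrite subSn // G2S subnKC // !mulnA.
have E2 : (\sum_(i < m.+1) d i * T0 a c i (m.+1 - i))%N = (e m * a m.+1)%N.
  rewrite -IH1 big_distrl /=; apply: eq_bigr => i _.
  have Hi : (i <= m)%N by rewrite -ltnS.
  by rewrite subSn //= addnS subnKC // !mulnA.
rewrite E1 E2 /G2 big_ord0 /T0.
move: (HS m); case: (a m.+1); case: (c m.+1); case: (d m.+1); case: (e m.+1);
  case: (e m) => //=.
Qed.

From mathcomp Require Import lra zify.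

Lemma floor_natP (R : realType) (t : R) : 0 <= t ->
  (`|Num.floor t|%N)%:R <= t /\ t < (`|Num.floor t|%N)%:R + 1.
Proof.
move=> t0; have f0 : 0 <= Num.floor t by rewrite floor_ge0.
rewrite natr_absz ger0_norm //; split; first exact: floor_le.
by rewrite -[1]/((1 : int)%:~R) -intrD; exact: floorD1_gt.
Qed.

Lemma floor_natE (R : realType) (t : R) (k : nat) :
  k%:R <= t -> t < k%:R + 1 -> `|Num.floor t|%N = k.
Proof.
move=> h1 h2; have -> : Num.floor t = k%:Z; last by [].
apply: floor_def; apply/andP; split => //.
by rewrite intrD.
Qed.

Definition Nf (R : realType) (v : R) (m : nat) := `|Num.floor (v * 2 ^+ m)|%N.

Arguments Nf {R} v m.

Lemma digitE (R : realType) (v : R) m : digit v m = odd (Nf v m).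
Proof. by []. Qed.

Lemma NfP (R : realType) (v : R) m : 0 <= v ->
  (Nf v m)%:R <= v * 2 ^+ m /\ v * 2 ^+ m < (Nf v m)%:R + 1.
Proof. by move=> v0; apply: floor_natP; rewrite mulr_ge0 // exprn_ge0. Qed.

Arguments NfP {R v} m _.

Lemma NfS (R : realType) (v : R) m : 0 <= v ->
  Nf v m.+1 = (2 * Nf v m + odd (Nf v m.+1))%N.
Proof.
move=> v0; have [h1 h2] := NfP m v0; have [h3 h4] := NfP m.+1 v0.
rewrite exprSr mulrA in h3 h4.
have H1 : (Nf v m.+1 < 2 * Nf v m + 2)%N.
  by rewrite -(ltr_nat R) natrD natrM; lra.
have H2 : (2 * Nf v m < Nf v m.+1 + 1)%N.
  by rewrite -(ltr_nat R) natrD natrM; lra.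
have [->|->] : Nf v m.+1 = (2 * Nf v m)%N \/ Nf v m.+1 = (2 * Nf v m).+1 by lia.
  by rewrite oddM /= addn0.
by rewrite /= oddM /= addn1.
Qed.

Lemma Nf0 (R : realType) (v : R) : 0 <= v -> v <= 1 -> Nf v 0 = odd (Nf v 0).
Proof.
move=> v0 v1; have [h1 h2] := NfP 0 v0; rewrite expr0 mulr1 in h1 h2.
have : (Nf v 0 <= 1)%N by rewrite -(ler_nat R); lra.
by case: (Nf v 0) => [|[|]].
Qed.

Lemma Nf_add (R : realType) (x y : R) m : 0 <= x -> 0 <= y ->
  Nf (x + y) m = (Nf x m + Nf y m)%N \/ Nf (x + y) m = (Nf x m + Nf y m).+1.
Proof.
move=> x0 y0; have [h1 h2] := NfP m x0; have [h3 h4] := NfP m y0.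
have xy0 : 0 <= x + y by rewrite addr_ge0.
have [h5 h6] := NfP m xy0; rewrite mulrDl in h5 h6.
have H1 : (Nf (x + y) m < Nf x m + Nf y m + 2)%N.
  by rewrite -(ltr_nat R) !natrD; lra.
have H2 : (Nf x m + Nf y m < Nf (x + y) m + 1)%N.
  by rewrite -(ltr_nat R) !natrD; lra.
lia.
Qed.

Lemma Nf_nat (R : realType) (k m : nat) : Nf (k%:R : R) m = (k * 2 ^ m)%N.
Proof.
apply: floor_natE; rewrite natrM natrX; lra.
Qed.

Arguments Nf0 {R v} _ _.
Arguments NfS {R v} m _.
Arguments Nf_add {R x y} m _ _.

Lemma carry_hyps (R : realType) (x y : R) : 0 <= x -> 0 <= y -> x + y <= 1 ->
  (digit (x + y) 0 : nat) = ((digit x 0 : nat) + digit y 0 +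
      (Nf (x + y) 0 == (Nf x 0 + Nf y 0).+1))%N /\
  forall m, ((digit (x + y) m.+1 : nat) + 2 * (Nf (x + y) m == (Nf x m + Nf y m).+1) =
     (digit x m.+1 : nat) + digit y m.+1 + (Nf (x + y) m.+1 == (Nf x m.+1 + Nf y m.+1).+1))%N.
Proof.
move=> x0 y0 xy1; have xy0 : 0 <= x + y by rewrite addr_ge0.
split.
  rewrite !digitE -(Nf0 x0) ?(le_trans _ xy1) ?lerDl ?lerDr //.
  rewrite -(Nf0 y0) ?(le_trans _ xy1) ?lerDl ?lerDr // -(Nf0 xy0) //.
  have := Nf_add 0 x0 y0; lia.
move=> m; rewrite !digitE.
have := NfS m x0; have := NfS m y0; have := NfS m xy0.
have := Nf_add m x0 y0; have := Nf_add m.+1 x0 y0.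
lia.
Qed.

Lemma TRc_false (R : realType) (p : seq bool -> R) b l k :
  TRc p b false l k = T0 (digit (p (rcons b false))) (digit (p (rcons b true))) l k.
Proof. by case: k => [|k]; rewrite ?TRc0 ?TRcS. Qed.

Lemma TRc_true (R : realType) (p : seq bool -> R) b l k :
  TRc p b true l k = T0 (digit (p (rcons b true))) (digit (p (rcons b false))) l k.
Proof.
case: k => [|k]; first by rewrite TRc0 /= andbC.
by rewrite TRcS /= eq_sym G2_sym.
Qed.

Lemma Ncnt_digit (R : realType) (p : seq bool -> R) : binary_coded p ->
  forall b j, Ncnt p b j = digit (p b) j.
Proof.
case=> p1 p01 padd b; elim/last_ind: b => [|b x IH] j.
  rewrite /Ncnt p1 /= digitE.
  have := Nf_nat R 1 j; rewrite mulr1n mul1n => ->.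
  case: j => [|j]; first by [].
  rewrite expnS oddM /=; apply/eqP; rewrite -leqn0 leqNgt -has_count; apply/hasP => -[u _].
  by move/eqP => -[].
rewrite N_step.
under eq_bigr do rewrite IH.
have [x0 x1] := andP (p01 (rcons b false)).
have [y0 y1] := andP (p01 (rcons b true)).
have [z0 z1] := andP (p01 b).
have Hz : p b = p (rcons b false) + p (rcons b true) by apply: padd.
have z1' : p (rcons b false) + p (rcons b true) <= 1 by rewrite -Hz.
have [H0 HS] := carry_hyps _ _ _ x0 y0 z1'.
case: x.
  under eq_bigr do rewrite TRc_true.
  apply: (proj2 (carry_identity _ _ _
     (fun m => Nf (p (rcons b false) + p (rcons b true)) m ==
        (Nf (p (rcons b false)) m + Nf (p (rcons b true)) m).+1) _ _ j)).
    by rewrite Hz H0 (addnC (digit _ 0 : nat)).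
  by move=> m; rewrite Hz HS (addnC (digit (p (rcons b false)) m.+1 : nat)).
under eq_bigr do rewrite TRc_false.
apply: (proj2 (carry_identity _ _ _
     (fun m => Nf (p (rcons b false) + p (rcons b true)) m ==
        (Nf (p (rcons b false)) m + Nf (p (rcons b true)) m).+1) _ _ j)).
  by rewrite Hz H0.
by move=> m; rewrite Hz HS.
Qed.

Lemma sum_const_count (R : realType) (T : Type) (r : seq T) (P : pred T) (c : R) :
  \sum_(u <- r | P u) c = (count P r)%:R * c.
Proof.
elim: r => [|x r IH]; first by rewrite big_nil mul0r.
rewrite big_cons /= IH; case: (P x); rewrite ?add0n ?natrD ?mulrDl ?mul1r //.
Qed.

Lemma esum_piece (R : realType) (D : set (seq bool)) (f : nat -> R) j : 0 <= f j ->
  \esum_(u in D `&` [set u | size u = j]) (f (size u))%:E =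
  ((count (fun u => `[< D u >]) (allseq j))%:R * f j)%:E.
Proof.
move=> f0.
have fin : finite_set (D `&` [set u | size u = j]).
  apply: sub_finite_set (finite_seq (allseq j)) => u [_ Hu] /=.
  by rewrite mem_allseq Hu.
rewrite esum_fset //; last by move=> u; rewrite inE => -[_ ->].
rewrite fsumEFin //; congr (_%:E).
have -> : D `&` [set u | size u = j] =
    [set` (fun u => `[< D u >] && (size u == j)) : pred (seq bool)].
  apply/seteqP; split => u /=.
    by move=> [Du Hu]; rewrite /in_mem /= Hu eqxx andbT; apply/asboolP.
  by rewrite /in_mem /= => /andP [/asboolP Du /eqP Hu].
rewrite -(@bigfs _ _ _ _ (allseq j)); last 2 first.
- exact: allseq_uniq.
- by move=> u /andP [_]; rewrite -mem_allseq => ->.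
rewrite big_seq_cond (eq_bigr (fun _ => f j)); last first.
  by move=> u /andP [_ /andP [_ /eqP ->]].
rewrite -big_seq_cond sum_const_count; congr (_%:R * _).
by apply: eq_in_count => u; rewrite mem_allseq => ->; rewrite andbT.
Qed.

Lemma esum_by_size (R : realType) (D : set (seq bool)) (f : nat -> R) :
  (forall j, 0 <= f j) ->
  \esum_(u in D) (f (size u))%:E =
  (\sum_(j <oo) ((count (fun u => `[< D u >]) (allseq j))%:R * f j)%:E)%E.
Proof.
move=> f0.
have -> : \esum_(u in D) (f (size u))%:E =
    \esum_(u in \bigcup_(j in setT) (D `&` [set u | size u = j])) (f (size u))%:E.
  congr esum.
  apply/seteqP; split => u.
    by move=> Du; exists (size u).
  by move=> [j _ []].
rewrite esum_bigcupT; last 2 first.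
- move=> i k _ _ [u [[_ Hi] [_ Hk]]]; by rewrite -Hi -Hk.
- by move=> u; rewrite lee_fin.
rewrite nneseries_esumT; last first.
  by move=> j; rewrite lee_fin mulr_ge0.
apply: eq_esum => j _.
by rewrite esum_piece.
Qed.

Lemma sum_allseqS (R : realType) (F : seq bool -> R) n :
  \sum_(s <- allseq n.+1) F s =
  \sum_(s <- allseq n) (F (rcons s false) + F (rcons s true)).
Proof.
elim: n F => [|n IH] F.
  by rewrite /= !big_cons !big_nil !addr0.
have -> : allseq n.+2 = [seq false :: u | u <- allseq n.+1] ++
   [seq true :: u | u <- allseq n.+1] by [].
rewrite big_cat !big_map (IH (fun u => F (false :: u))) (IH (fun u => F (true :: u))).
have -> : allseq n.+1 = [seq false :: u | u <- allseq n] ++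
   [seq true :: u | u <- allseq n] by [].
by rewrite big_cat !big_map.
Qed.

Lemma sum_p_allseq (R : realType) (p : seq bool -> R) : binary_coded p ->
  forall n, \sum_(s <- allseq n) p s = 1.
Proof.
case=> p1 _ padd; elim=> [|n IH]; first by rewrite /= big_cons big_nil addr0.
by rewrite sum_allseqS -IH; apply: eq_bigr => s _; rewrite -padd.
Qed.

Definition Ssum (R : realType) (c : nat -> nat) m : R :=
  \sum_(0 <= j < m) (c j)%:R * 2 ^- j.
Arguments Ssum {R} c m.

Definition dig (R : realType) (x : R) := fun j => nat_of_bool (digit x j).
Arguments dig {R} x j.

Definition Kn (c : nat -> nat) m := (\sum_(0 <= j < m.+1) c j * 2 ^ (m - j))%N.

Lemma KnS c m : Kn c m.+1 = (2 * Kn c m + c m.+1)%N.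
Proof.
rewrite /Kn big_nat_recr //= subnn expn0 muln1; congr (_ + _)%N.
rewrite big_distrr /= !big_nat; apply: eq_bigr => j /andP [_ Hj].
by rewrite subSn // expnS mulnCA.
Qed.

Lemma Kn0 c : Kn c 0 = c 0.
Proof. by rewrite /Kn big_nat1 muln1. Qed.

Lemma Ssum_Kn (R : realType) c m : Ssum c m.+1 * 2 ^+ m = (Kn c m)%:R :> R.
Proof.
rewrite /Ssum /Kn big_distrl natr_sum /= !big_nat; apply: eq_bigr => j /andP [_ Hj].
rewrite natrM natrX -mulrA; congr (_ * _).
rewrite exprB //; last by rewrite unitfE pnatr_eq0.
by rewrite mulrC.
Qed.

Lemma Kn_digit (R : realType) (x : R) : 0 <= x -> x <= 1 ->
  forall m, Kn (dig x) m = Nf x m.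
Proof.
move=> x0 x1; elim=> [|m IH]; first by rewrite Kn0 /dig digitE -Nf0.
by rewrite KnS IH /dig digitE -NfS.
Qed.

Lemma Kn_le (R : realType) (x : R) c m : 0 <= x -> Ssum c m.+1 <= x ->
  (Kn c m <= Nf x m)%N.
Proof.
move=> x0 Hs; have [_ h] := NfP m x0.
have h2 : Ssum c m.+1 * 2 ^+ m <= x * 2 ^+ m by rewrite ler_pM2r // exprn_gt0.
rewrite Ssum_Kn in h2.
rewrite -ltnS -(ltr_nat R) -addn1 natrD.
exact: (le_lt_trans h2 h).
Qed.

Lemma Ssum_le_digits (R : realType) (x : R) c m : 0 <= x -> x <= 1 ->
  Ssum c m.+1 <= x -> Ssum c m.+1 <= (Ssum (dig x) m.+1 : R).
Proof.
move=> x0 x1 Hs.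
have h := Kn_le _ _ _ _ x0 Hs.
have p2 : 0 < (2:R) ^+ m by rewrite exprn_gt0.
rewrite -(ler_pM2r p2) !Ssum_Kn ler_nat Kn_digit //.
Qed.

Lemma digits_le (R : realType) (x : R) m : 0 <= x -> x <= 1 ->
  Ssum (dig x) m <= x.
Proof.
move=> x0 x1; case: m => [|m]; first by rewrite /Ssum big_geq.
have p2 : 0 < (2:R) ^+ m by rewrite exprn_gt0.
rewrite -(ler_pM2r p2) Ssum_Kn Kn_digit //.
by have [h _] := NfP m x0.
Qed.

Lemma digits_ge (R : realType) (x : R) m : 0 <= x -> x <= 1 ->
  x < Ssum (dig x) m.+1 + 2 ^- m.
Proof.
move=> x0 x1.
have p2 : 0 < (2:R) ^+ m by rewrite exprn_gt0.
rewrite -(ltr_pM2r p2) mulrDl Ssum_Kn Kn_digit // mulVf ?gt_eqF //.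
by have [_ h] := NfP m x0.
Qed.

From mathcomp Require Import ring.

Lemma SsumS (R : realType) c m : Ssum c m.+1 = Ssum c m + (c m)%:R * 2 ^- m :> R.
Proof. by rewrite /Ssum big_nat_recr. Qed.

Lemma Ssum0 (R : realType) c : Ssum c 0 = 0 :> R.
Proof. by rewrite /Ssum big_geq. Qed.

Lemma abel (R : realType) (g : nat -> nat) (x : R) M :
  \sum_(0 <= j < M) (g j)%:R * (j%:R * 2 ^- j) + M%:R * (x - Ssum g M) =
  \sum_(0 <= m < M) (x - Ssum g m.+1).
Proof.
elim: M => [|M IH]; first by rewrite !big_geq // mul0r addr0.
rewrite big_nat_recr //= [RHS]big_nat_recr //= -IH SsumS -[M.+1]addn1 natrD.
set A := \sum_(0 <= j < M) _.
ring.
Qed.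

Lemma nneseries_le_bound (R : realType) (a : nat -> \bar R) L :
  (forall n, (0 <= a n)%E) -> (forall M, (\sum_(0 <= j < M) a j <= L)%E) ->
  (\sum_(j <oo) a j <= L)%E.
Proof.
move=> a0 H; apply: lime_le; first exact: is_cvg_nneseries.
by apply: nearW.
Qed.

Lemma Ssum_le_series (R : realType) (c : nat -> nat) (x : R) M :
  (\sum_(j <oo) ((c j)%:R * 2 ^- j)%:E = x%:E)%E -> Ssum c M <= x.
Proof.
move=> H; rewrite -lee_fin -H /Ssum -sumEFin.
apply: nneseries_lim_ge => n _ _; rewrite lee_fin mulr_ge0 // invr_ge0 exprn_ge0 //.
Qed.

Lemma w_ge0 (R : realType) j : 0 <= (2 : R) ^- j.
Proof. by rewrite invr_ge0 exprn_ge0. Qed.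

Lemma digit_series (R : realType) (x : R) : 0 <= x -> x <= 1 ->
  (\sum_(j <oo) ((dig x j)%:R * 2 ^- j)%:E = x%:E)%E.
Proof.
move=> x0 x1; apply/eqP; rewrite eq_le; apply/andP; split.
  apply: nneseries_le_bound => [n|M]; first by rewrite lee_fin mulr_ge0 ?w_ge0.
  by rewrite sumEFin lee_fin; apply: digits_le.
apply/lee_addgt0Pr => e e0.
pose k := (`|Num.floor (e^-1)|%N).+1.
have ei0 : 0 <= e^-1 by rewrite invr_ge0 ltW.
have [_ hk] := floor_natP _ _ ei0.
have hk2 : e^-1 < 2 ^+ k.
  apply: (lt_le_trans hk); rewrite -natrX -[_ + 1](natrD _ _ 1) addn1 ler_nat.
  exact/ltnW/ltn_expl.
have hk3 : 2 ^- k < e.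
  rewrite -div1r ltr_pdivrMr ?exprn_gt0 //.
  by move: hk2; rewrite -div1r ltr_pdivrMr // mulrC.
have hx := digits_ge _ _ k x0 x1.
apply: (le_trans (y := ((Ssum (dig x) k.+1) + e)%:E)).
  by rewrite lee_fin; apply: ltW; apply: (lt_le_trans hx); rewrite lerD2l ltW.
rewrite EFinD leeD2r // /Ssum -sumEFin.
by apply: nneseries_lim_ge => n _ _; rewrite lee_fin mulr_ge0 ?w_ge0.
Qed.

Lemma tail_mass (R : realType) (c : nat -> nat) (x : R) M :
  (\sum_(j <oo) ((c j)%:R * 2 ^- j)%:E = x%:E)%E ->
  (\sum_(M <= j <oo) ((c j)%:R * 2 ^- j)%:E = (x - Ssum c M)%:E)%E.
Proof.
move=> H.
have Hs := @nneseries_split R (fun j => ((c j)%:R * 2 ^- j)%:E) 0 M.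
rewrite add0n H in Hs.
have Hs' := Hs (fun k _ => (mulr_ge0 (ler0n _ _) (w_ge0 _ _) : (0 <= _)%R)).
rewrite sumEFin in Hs'.
move: Hs'; case: (\sum_(M <= j <oo) _)%E => [t| |] //=.
  by move=> [] ->; rewrite /Ssum addrC addrK.
Qed.

Lemma LB (R : realType) (x : R) (c : nat -> nat) : 0 <= x -> x <= 1 ->
  (\sum_(j <oo) ((c j)%:R * 2 ^- j)%:E = x%:E)%E ->
  (\sum_(j <oo) ((dig x j)%:R * (j%:R * 2 ^- j))%:E <=
   \sum_(j <oo) ((c j)%:R * (j%:R * 2 ^- j) : R)%:E)%E.
Proof.
move=> x0 x1 H.
apply: nneseries_le_bound => [n|M]; first by rewrite lee_fin !mulr_ge0 ?w_ge0.
rewrite sumEFin.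
have key : \sum_(0 <= j < M) (dig x j)%:R * (j%:R * 2 ^- j) <=
   \sum_(0 <= j < M) (c j)%:R * (j%:R * 2 ^- j) + M%:R * (x - Ssum c M).
  have A1 := abel _ (dig x) x M; have A2 := abel _ c x M.
  have B : \sum_(0 <= m < M) (x - Ssum (dig x) m.+1) <= \sum_(0 <= m < M) (x - Ssum c m.+1).
    apply: ler_sum => m _; rewrite lerB // Ssum_le_digits //.
    exact: (Ssum_le_series _ _ _ _ H).
  have C : 0 <= M%:R * (x - Ssum (dig x) M) by rewrite mulr_ge0 // subr_ge0 digits_le.
  lra.
apply: (le_trans (y := (\sum_(0 <= j < M) (c j)%:R * (j%:R * 2 ^- j) +
   M%:R * (x - Ssum c M))%:E)); first by rewrite lee_fin.
have Hs := @nneseries_split R (fun j => ((c j)%:R * (j%:R * 2 ^- j))%:E) 0 M.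
rewrite add0n in Hs; rewrite Hs; last by move=> k _; rewrite lee_fin !mulr_ge0 ?w_ge0.
rewrite EFinD sumEFin leeD2l // EFinM.
rewrite -(tail_mass _ _ _ _ H) -nneseriesZl; last by move=> i _; rewrite lee_fin mulr_ge0 ?w_ge0.
rewrite !(eseries_cond _ xpredT M).
apply: lee_nneseries => [i _ _|n /andP [_ Hn]].
  by rewrite -EFinM lee_fin !mulr_ge0 ?w_ge0.
by rewrite -EFinM lee_fin mulrCA ler_wpM2l // ler_wpM2r ?w_ge0 // ler_nat.
Qed.

Lemma asb_eq (T : eqType) (a b : T) : `[< a = b >] = (a == b).
Proof. by apply/asboolP/eqP. Qed.

Lemma asb_neq (T : eqType) (a b : T) : `[< a <> b >] = (a != b).
Proof. by apply/asboolP/idP => [H|/eqP //]; apply/eqP. Qed.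

Lemma esum_dom (R : realType) (Y : seq bool -> option (seq bool)) n (f : nat -> R) :
  (forall j, 0 <= f j) -> (forall u s, Y u = Some s -> size s = n) ->
  \esum_(u in gdom Y) (f (size u))%:E =
  (\sum_(s <- allseq n) \esum_(u in [set u | Y u = Some s]) (f (size u))%:E)%E.
Proof.
move=> f0 HY.
rewrite esum_by_size //.
under [RHS]eq_bigr do rewrite esum_by_size //.
rewrite -nneseries_sum; last by move=> s j _; rewrite lee_fin mulr_ge0.
apply: eq_eseriesr => j _.
rewrite sumEFin; congr (_%:E).
rewrite -big_distrl /= -natr_sum; congr (_%:R * _).
rewrite count_sum.
under [RHS]eq_bigr do rewrite count_sum.
rewrite exchange_big /=; apply: eq_bigr => u _.
rewrite asb_neq.
under eq_bigr do rewrite /= asb_eq.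
rewrite -count_sum.
case E: (Y u) => [s|] /=.
  rewrite (eq_count (a2 := pred1 s)); last by move=> t /=; rewrite eq_sym.
  rewrite count_uniq_mem ?allseq_uniq // mem_allseq (HY _ _ E) eqxx //.
by rewrite count_pred0.
Qed.

Lemma gen_some (R : realType) (p : seq bool -> R) n u s :
  genopt_gen p n u = Some s <-> genopt_run p n u = Some (s, size u, [::]).
Proof.
rewrite /genopt_gen; split.
  case E: (genopt_run p n u) => [[[b l] [|x r]]|] // [<-].
  by have [u1 [Eu -> _ _]] := run_suffix _ _ _ _ _ _ _ E; rewrite Eu cats0.
by move=> ->.
Qed.

Lemma gen_size (R : realType) (p : seq bool -> R) n u s :
  genopt_gen p n u = Some s -> size s = n.
Proof.
move/gen_some => E.
by have [_ [_ _ _ ->]] := run_suffix _ _ _ _ _ _ _ E.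
Qed.

Lemma gen_count (R : realType) (p : seq bool -> R) : binary_coded p ->
  forall s j, count (fun u => `[< [set u | genopt_gen p (size s) u = Some s] u >]) (allseq j)
    = dig (p s) j.
Proof.
move=> Hp s j; rewrite /dig -Ncnt_digit // /Ncnt.
apply: eq_in_count => u; rewrite mem_allseq => /eqP Hu /=.
apply/asboolP/eqP => [/gen_some|H]; first by rewrite Hu.
by apply/gen_some; rewrite Hu.
Qed.

Lemma gen_esum (R : realType) (p : seq bool -> R) (f : nat -> R) : binary_coded p ->
  (forall j, 0 <= f j) -> forall n s, size s = n ->
  \esum_(u in [set u | genopt_gen p n u = Some s]) (f (size u))%:E =
  (\sum_(j <oo) ((dig (p s) j)%:R * f j)%:E)%E.
Proof.
move=> Hp f0 n s Hs; rewrite esum_by_size //.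
by apply: eq_eseriesr => j _; rewrite -Hs gen_count.
Qed.

Theorem theorem4p6 (R : realType) (p : seq bool -> R) :
  binary_coded p ->
  forall n : nat,
    is_generator n p (genopt_gen p n) /\
    (forall Y, is_generator n p Y ->
       (entropy_cost (R := R) (genopt_gen p n) <= entropy_cost (R := R) Y)%E).
Proof.
move=> Hp n.
have p01 := Hp; case: p01 => _ p01 _.
have w0 : forall j, 0 <= (2 : R) ^- j by move=> j; apply: w_ge0.
have c0 : forall j, 0 <= j%:R * (2 : R) ^- j by move=> j; rewrite mulr_ge0 ?w_ge0.
split.
  split.
  - move=> u v; rewrite /gdom /= /genopt_gen.
    case E: (genopt_run p n u) => [[[b l] [|x r]]|] // _.
    by rewrite (run_cat _ _ _ _ v _ _ _ E); case: v.
  - rewrite /weight (esum_dom _ _ n (fun j => 2 ^- j)) //; last exact: gen_size.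
    rewrite big_seq (eq_bigr (fun s => (p s)%:E)); last first.
      move=> s; rewrite mem_allseq => /eqP Hs.
      have [h0 h1] := andP (p01 s).
      by rewrite (gen_esum _ _ (fun j => 2 ^- j)) // digit_series.
    by rewrite -big_seq sumEFin sum_p_allseq.
  - exact: gen_size.
  - move=> s Hs; rewrite /weight (gen_esum _ _ (fun j => 2 ^- j)) //.
    have [h0 h1] := andP (p01 s).
    by rewrite digit_series.
move=> Y [Ypf Ymass Ysize Ydist].
rewrite /entropy_cost (esum_dom _ _ n (fun j => j%:R * 2 ^- j)) //; last exact: gen_size.
rewrite (esum_dom _ _ n (fun j => j%:R * 2 ^- j)) //.
rewrite !big_seq; apply: lee_sum => s; rewrite mem_allseq => /eqP Hs.
rewrite (gen_esum _ _ (fun j => j%:R * 2 ^- j)) // (esum_by_size _ _ (fun j => j%:R * 2 ^- j)) //.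
have [h0 h1] := andP (p01 s).
apply: LB => //.
by have := Ydist s Hs; rewrite /weight (esum_by_size _ _ (fun j => 2 ^- j)).
Qed.
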